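(* Let $M$ be a smooth 3-manifold with a smooth contact sub-Riemannian structure $(D,g)$, let $S\subset M$ be an embedded $C^2$ surface, and let $p\in S$ be a characteristic point. Near $p$ let $(X_1,X_2)$ be an oriented $g$-orthonormal frame of $D$ and $X_0$ a vector field transverse to $D$, and for $\varepsilon>0$ let $g^\varepsilon$ be the Riemannian metric for which $(\varepsilon X_0,X_1,X_2)$ is orthonormal. Then, as $\varepsilon\to0$, $$K^\varepsilon_{\mathrm{ext}}(p)=-\frac{3}{4\varepsilon^2}(c^0_{12}(p))^2+O(1).$$
   Context: A point $p\in S$ is characteristic if $T_pS=D_p$. The structure functions $c^k_{ij}$ are defined by $[X_j,X_i]=c^1_{ij}X_1+c^2_{ij}X_2+c^0_{ij}X_0$; $c^0_{12}$ is the $X_0$-coefficient of $[X_2,X_1]$. With $\overline\nabla^\varepsilon$ the Levi-Civita connection of $g^\varepsilon$ and $(X,Y)$ any frame of $TS$, the extrinsic curvature is $K^\varepsilon_{\mathrm{ext}}=\dfrac{\langle\overline\nabla^\varepsilon_X\overline\nabla^\varepsilon_YY-\overline\nabla^\varepsilon_Y\overline\nabla^\varepsilon_XY-\overline\nabla^\varepsilon_{[X,Y]}Y,X\rangle_{g^\varepsilon}}{|X|^2_{g^\varepsilon}|Y|^2_{g^\varepsilon}-\langle X,Y\rangle^2_{g^\varepsilon}}$ (the sectional curvature of $g^\varepsilon$ on the plane $TS$). *)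

(* Defs.v *)
(* Local coordinate model of the
   3-manifold: an open set U of R^3 = 'rV[R]_3. *)
From HB Require Import structures.
From mathcomp Require Import all_boot all_order all_algebra.
From mathcomp Require Import all_classical all_reals all_analysis.
Set Implicit Arguments. Unset Strict Implicit. Unset Printing Implicit Defensive.
Import Order.TTheory GRing.Theory Num.Theory.
Import numFieldNormedType.Exports.
Local Open Scope ring_scope.
Local Open Scope classical_set_scope.

Section Defs.
Variable R : realType.
Local Notation V := 'rV[R]_3.

Definition ee (a : 'I_3) : V := delta_mx 0 a.

Definition pd (a : 'I_3) (f : V -> R) : V -> R := fun x => 'D_(ee a) f x.

Fixpoint Ck (k : nat) (U : set V) (f : V -> R) : Prop :=
  match k with
  | 0 => forall x, U x -> {for x, continuous f}
  | k'.+1 => (forall x, U x -> {for x, continuous f}) /\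
             (forall a x, U x -> derivable f x (ee a)) /\
             (forall a, Ck k' U (pd a f))
  end.

Definition smooth_on (U : set V) (f : V -> R) := forall k, Ck k U f.

Definition vsmooth_on (U : set V) (X : V -> V) :=
  forall i : 'I_3, smooth_on U (fun y => X y 0 i).

Definition lie (X Y : V -> V) : V -> V := fun x =>
  \row_k \sum_(a < 3) (X x 0 a * pd a (fun y => Y y 0 k) x
                       - Y x 0 a * pd a (fun y => X y 0 k) x).

Definition frameM (X : 'I_3 -> V -> V) (x : V) : 'M[R]_3 :=
  \matrix_(i, j) X i x 0 j.

(* structure functions: [X_j, X_i] = sum_k c^k_{ij} X_k *)
Definition cstruct (X : 'I_3 -> V -> V) (k i j : 'I_3) (x : V) : R :=
  (lie (X j) (X i) x *m invmx (frameM X x)) 0 k.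

Definition frameE (X : 'I_3 -> V -> V) (eps : R) (x : V) : 'M[R]_3 :=
  \matrix_(i, j) ((if i == 0 then eps else 1) * X i x 0 j).

(* metric g^eps in coordinates: g(u,v) = u G v^T, where (eps X0, X1, X2)
   is g-orthonormal;  and its inverse *)
Definition Gm X eps x : 'M[R]_3 :=
  invmx (frameE X eps x) *m (invmx (frameE X eps x))^T.
Definition Ginv X eps x : 'M[R]_3 := (frameE X eps x)^T *m frameE X eps x.

Definition gdot X eps x (u v : V) : R := (u *m Gm X eps x *m v^T) 0 0.

Definition Gam X eps (c a b : 'I_3) (x : V) : R :=
  2^-1 * \sum_(d < 3) Ginv X eps x c d *
     (pd a (fun y => Gm X eps y b d) x + pd b (fun y => Gm X eps y a d) x
      - pd d (fun y => Gm X eps y a b) x).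

(* Riemann tensor: R(d_a,d_b) d_c = sum_d Rm d a b c d_d, where
   R(X,Y)Z = nabla_X nabla_Y Z - nabla_Y nabla_X Z - nabla_[X,Y] Z *)
Definition Rm X eps (d a b c : 'I_3) (x : V) : R :=
  pd a (Gam X eps d b c) x - pd b (Gam X eps d a c) x
  + \sum_(e < 3) (Gam X eps d a e x * Gam X eps e b c x
                  - Gam X eps d b e x * Gam X eps e a c x).

Definition Kext X eps (x u v : V) : R :=
  (\sum_(a < 3) \sum_(b < 3) \sum_(c < 3) \sum_(d < 3) \sum_(e < 3)
     u 0 a * v 0 b * v 0 c * Rm X eps d a b c x * Gm X eps x d e * u 0 e)
  / (gdot X eps x u u * gdot X eps x v v - (gdot X eps x u v) ^+ 2).

Definition C2_surface (S : set V) : Prop :=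
  forall q, S q -> exists (W : set V) (phi : V -> R),
    [/\ open W, W q, Ck 2 W phi,
        (forall x, W x -> exists a, pd a phi x != 0) &
        (forall x, W x -> (S x <-> phi x = 0))].

Definition tangent_space (S : set V) (p : V) : set V :=
  [set w | exists gam : R -> V,
     [/\ gam 0 = p, \forall t \near (0 : R), S (gam t),
         derivable gam 0 1 & 'D_1 gam 0 = w]].

Definition distr (X : 'I_3 -> V -> V) (x : V) : set V :=
  [set w | exists s t : R, w = s *: X 1 x + t *: X 2 x].

End Defs.

(* Main.v *)
Require Import Defs.
From HB Require Import structures.
From mathcomp Require Import all_boot all_order all_algebra.
From mathcomp Require Import all_classical all_reals all_analysis.
From mathcomp Require Import ring lra.
From mathcomp Require Import fingroup perm.
Import Order.TTheory GRing.Theory Num.Theory.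
Import numFieldNormedType.Exports.
Local Open Scope ring_scope.
Local Open Scope classical_set_scope.
Set Implicit Arguments. Unset Strict Implicit. Unset Printing Implicit Defensive.

Section Calc.
Variable R : realType.
Local Notation V := 'rV[R]_3.
Variable U : set V.
Hypothesis oU : open U.

Lemma nearU x : U x -> \forall y \near x, U y.
Proof. by move=> Ux; apply: open_nbhs_nbhs; split. Qed.

Lemma Ck_cont k f : Ck k U f -> forall x, U x -> {for x, continuous f}.
Proof. by case: k => [|k] //= [] . Qed.

Lemma Ck_weak k f : Ck k.+1 U f -> Ck k U f.
Proof.
elim: k f => [|k IH] f /= [c [d h]] //.
by split=> //; split=> // a; apply: IH; exact: h.
Qed.

Lemma Ck_ext k f g : Ck k U f -> (forall x, U x -> f x = g x) -> Ck k U g.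
Proof.
elim: k f g => [|k IH] f g /=.
- move=> c fg x Ux.
  have nfg : {near x, f =1 g}.
    by apply: filterS (nearU Ux) => y Uy; exact: fg.
  rewrite /prop_for /continuous_at -(fg x Ux); apply: cvg_trans (c x Ux).
  exact: (near_eq_cvg nfg).
- move=> [c [d h]] fg; split; [|split].
  + move=> x Ux.
    have nfg : {near x, f =1 g}.
      by apply: filterS (nearU Ux) => y Uy; exact: fg.
    rewrite /prop_for /continuous_at -(fg x Ux); apply: cvg_trans (c x Ux).
    exact: (near_eq_cvg nfg).
  + move=> a x Ux.
    have nfg : {near x, f =1 g}.
      by apply: filterS (nearU Ux) => y Uy; exact: fg.
    exact: near_eq_derivable nfg (d a x Ux).
  + move=> a; apply: (IH (pd a f) _ (h a)) => x Ux.
    rewrite /pd; apply: near_eq_derive.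
    by apply: filterS (nearU Ux) => y Uy; exact: fg.
Qed.

Definition Cinf f := forall k, Ck k U f.

Lemma Cinf_ext f g : Cinf f -> (forall x, U x -> f x = g x) -> Cinf g.
Proof. by move=> h fg k; apply: Ck_ext (h k) fg. Qed.

Lemma Cinf_pd (a : 'I_3) f : Cinf f -> Cinf (pd a f).
Proof. by move=> h k; have /= [_ [_ ]] := h k.+1; apply. Qed.

Lemma Cinf_der (a : 'I_3) f x : Cinf f -> U x -> derivable f x (ee R a).
Proof. by move=> h Ux; have /= [_ [d _]] := h 1%N; exact: d. Qed.

Lemma Cinf_cont f x : Cinf f -> U x -> {for x, continuous f}.
Proof. by move=> h; exact: (h 0%N). Qed.

Lemma Ck_cst k (c : R) : Ck k U (fun=> c).
Proof.
elim: k c => [|k IH] c /=.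
- by move=> x _; exact: cst_continuous.
- split; first by move=> x _; exact: cst_continuous.
  split; first by move=> a x _; exact: derivable_cst.
  move=> a; apply: (Ck_ext (IH 0)) => x _.
  by rewrite /pd derive_cst.
Qed.

Lemma Ck_add k f g : Ck k U f -> Ck k U g -> Ck k U (fun x => f x + g x).
Proof.
elim: k f g => [|k IH] f g /=.
- by move=> cf cg x Ux; apply: continuousD; [exact: cf|exact: cg].
- move=> [cf [df hf]] [cg [dg hg]]; split; [|split].
  + by move=> x Ux; apply: continuousD; [exact: cf|exact: cg].
  + move=> a x Ux; exact: derivableD (df a x Ux) (dg a x Ux).
  + move=> a; apply: (Ck_ext (IH _ _ (hf a) (hg a))) => x Ux.
    by rewrite /pd (deriveD (df a x Ux) (dg a x Ux)).
Qed.

Lemma Ck_opp k f : Ck k U f -> Ck k U (fun x => - f x).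
Proof.
elim: k f => [|k IH] f /=.
- by move=> cf x Ux; apply: continuousN; exact: cf.
- move=> [cf [df hf]]; split; [|split].
  + by move=> x Ux; apply: continuousN; exact: cf.
  + move=> a x Ux; exact: derivableN (df a x Ux).
  + move=> a; apply: (Ck_ext (IH _ (hf a))) => x Ux.
    by rewrite /pd (deriveN (df a x Ux)).
Qed.

Lemma Ck_mul k f g : Ck k U f -> Ck k U g -> Ck k U (fun x => f x * g x).
Proof.
elim: k f g => [|k IH] f g /=.
- by move=> cf cg x Ux; apply: continuousM; [exact: cf|exact: cg].
- move=> [cf [df hf]] [cg [dg hg]]; split; [|split].
  + by move=> x Ux; apply: continuousM; [exact: cf|exact: cg].
  + move=> a x Ux; exact: derivableM (df a x Ux) (dg a x Ux).
  + move=> a.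
    have Hf : Ck k U f by apply: Ck_weak; split=> //; split.
    have Hg : Ck k U g by apply: Ck_weak; split=> //; split.
    apply: (Ck_ext (Ck_add (IH _ _ Hf (hg a)) (IH _ _ Hg (hf a)))) => x Ux.
    by rewrite /pd (deriveM (df a x Ux) (dg a x Ux)).
Qed.

Lemma Ck_inv k f : Ck k U f -> (forall x, U x -> f x != 0) ->
  Ck k U (fun x => (f x)^-1).
Proof.
move=> + nz; elim: k f nz => [|k IH] f nz /=.
- by move=> cf x Ux; apply: continuousV; [exact: nz|exact: cf].
- move=> [cf [df hf]]; split; [|split].
  + by move=> x Ux; apply: continuousV; [exact: nz|exact: cf].
  + move=> a x Ux; exact: derivableV (nz x Ux) (df a x Ux).
  + move=> a.
    have Hf : Ck k U f by apply: Ck_weak; split=> //; split.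
    have Hi := IH _ nz Hf.
    apply: (Ck_ext (Ck_mul (Ck_opp (Ck_mul Hi Hi)) (hf a))) => x Ux.
    rewrite /pd (deriveV (nz x Ux) (df a x Ux)).
    by rewrite /= expr2 invfM.
Qed.

Lemma Cinf_cst c : Cinf (fun=> c). Proof. by move=> k; exact: Ck_cst. Qed.
Lemma Cinf_add f g : Cinf f -> Cinf g -> Cinf (fun x => f x + g x).
Proof. by move=> hf hg k; exact: Ck_add. Qed.
Lemma Cinf_opp f : Cinf f -> Cinf (fun x => - f x).
Proof. by move=> hf k; exact: Ck_opp. Qed.
Lemma Cinf_sub f g : Cinf f -> Cinf g -> Cinf (fun x => f x - g x).
Proof. by move=> hf hg; apply: Cinf_add hf (Cinf_opp hg). Qed.
Lemma Cinf_mul f g : Cinf f -> Cinf g -> Cinf (fun x => f x * g x).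
Proof. by move=> hf hg k; exact: Ck_mul. Qed.
Lemma Cinf_inv f : Cinf f -> (forall x, U x -> f x != 0) -> Cinf (fun x => (f x)^-1).
Proof. by move=> hf nz k; exact: Ck_inv. Qed.

Lemma Cinf_sum (I : Type) (r : seq I) (P : pred I) (F : I -> V -> R) :
  (forall i, P i -> Cinf (F i)) -> Cinf (fun x => \sum_(i <- r | P i) F i x).
Proof.
move=> h; elim: r => [|i r IH].
  by apply: (Cinf_ext (Cinf_cst 0)) => x _; rewrite big_nil.
case Pi: (P i).
  by apply: (Cinf_ext (Cinf_add (h i Pi) IH)) => x _; rewrite big_cons Pi.
by apply: (Cinf_ext IH) => x _; rewrite big_cons Pi.
Qed.

Lemma Cinf_prod (I : Type) (r : seq I) (P : pred I) (F : I -> V -> R) :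
  (forall i, P i -> Cinf (F i)) -> Cinf (fun x => \prod_(i <- r | P i) F i x).
Proof.
move=> h; elim: r => [|i r IH].
  by apply: (Cinf_ext (Cinf_cst 1)) => x _; rewrite big_nil.
case Pi: (P i).
  by apply: (Cinf_ext (Cinf_mul (h i Pi) IH)) => x _; rewrite big_cons Pi.
by apply: (Cinf_ext IH) => x _; rewrite big_cons Pi.
Qed.

End Calc.
Section Calc2.
Variable R : realType.
Local Notation V := 'rV[R]_3.
Variable U : set V.
Hypothesis oU : open U.

Lemma Cinf_det n (M : V -> 'M[R]_n) :
  (forall i j, Cinf U (fun y => M y i j)) -> Cinf U (fun y => \det (M y)).
Proof.
move=> h.
have H : Cinf U (fun y => \sum_(s <- index_enum {perm 'I_n} | xpredT s)
    (-1) ^+ s * \prod_(i <- index_enum 'I_n | xpredT i) M y i (s i)).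
  apply: (Cinf_sum oU) => s _.
  apply: (Cinf_mul oU (Cinf_cst oU _)).
  exact: (Cinf_prod oU _ (fun i _ => h i (s i))).
by apply: (Cinf_ext oU H) => y _.
Qed.

Lemma Cinf_invmx n (M : V -> 'M[R]_n) :
  (forall y, U y -> M y \in unitmx) ->
  (forall i j, Cinf U (fun y => M y i j)) ->
  forall i j, Cinf U (fun y => invmx (M y) i j).
Proof.
move=> un h i j.
have nz : forall y, U y -> \det (M y) != 0.
  by move=> y Uy; rewrite -unitfE -unitmxE; exact: un.
have hc : Cinf U (fun y => cofactor (M y) j i).
  apply: (Cinf_mul oU (Cinf_cst oU _)).
  apply: Cinf_det => k l.
  by apply: (Cinf_ext oU (h (lift j k) (lift i l))) => y _; rewrite !mxE.
apply: (Cinf_ext oU (Cinf_mul oU (Cinf_inv oU (Cinf_det h) nz) hc)) => y Uy.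
by rewrite /invmx un // !mxE.
Qed.
End Calc2.

Section Core.
Variable R : realFieldType.

Lemma sum3E (F : 'I_3 -> R) : \sum_(i < 3) F i = F 0 + F 1 + F 2.
Proof.
rewrite !big_ord_recr big_ord0 /= add0r.
congr (F _ + F _ + F _); exact: val_inj.
Qed.

Variables (th u v w X0 : 'I_3 -> R) (Dth P : 'I_3 -> 'I_3 -> R).
Variables (DDth DP G1 G0 : 'I_3 -> 'I_3 -> 'I_3 -> R).
Variable dG1 : 'I_3 -> 'I_3 -> 'I_3 -> 'I_3 -> R.

Definition dot (x y : 'I_3 -> R) := \sum_(i < 3) x i * y i.
Definition tau (x y : 'I_3 -> R) := \sum_(a < 3) \sum_(c < 3) x a * y c * Dth a c.
Definition LB a b f := (Dth a b * th f + th b * Dth a f) + (Dth b a * th f + th a * Dth b f)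
  - (Dth f a * th b + th a * Dth f b).
Definition ddB x a b f := DDth x a b * th f + Dth a b * Dth x f + Dth x b * Dth a f
  + th b * DDth x a f.
Definition dLB x a b f := ddB x a b f + ddB x b a f - ddB x f a b.

Hypothesis E1 : forall c a b, G1 c a b = 2^-1 * \sum_(f < 3) P c f * LB a b f.
Hypothesis E2 : forall x c a b, dG1 x c a b =
  2^-1 * \sum_(f < 3) (DP x c f * LB a b f + P c f * dLB x a b f).
Hypothesis E3 : forall a b, \sum_(e < 3) th e * G0 e a b = 2^-1 * \sum_(f < 3) X0 f * LB a b f.
Hypothesis hu : dot th u = 0.
Hypothesis hv : dot th v = 0.
Hypothesis hP : forall c, \sum_(f < 3) P c f * th f = 0.
Hypothesis hDP : forall x c, \sum_(f < 3) DP x c f * th f = - \sum_(f < 3) P c f * Dth x f.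
Hypothesis hw : forall f, \sum_(d < 3) w d * P d f = u f.
Hypothesis hX0 : \sum_(f < 3) X0 f * th f = 1.

Lemma LBc x y : dot th x = 0 -> dot th y = 0 -> forall f,
  \sum_(a < 3) \sum_(b < 3) x a * y b * LB a b f = (tau x y + tau y x) * th f.
Proof.
move=> hx hy f.
have -> : \sum_(a < 3) \sum_(b < 3) x a * y b * LB a b f =
  (tau x y + tau y x) * th f
  + dot th y * (\sum_(a < 3) x a * (Dth a f - Dth f a))
  + dot th x * (\sum_(b < 3) y b * (Dth b f - Dth f b)).
  by rewrite /dot /tau /LB !sum3E; ring.
by rewrite hx hy; ring.
Qed.

Lemma G1c x y : dot th x = 0 -> dot th y = 0 -> forall e,
  \sum_(a < 3) \sum_(b < 3) x a * y b * G1 e a b = 0.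
Proof.
move=> hx hy e.
have -> : \sum_(a < 3) \sum_(b < 3) x a * y b * G1 e a b =
  2^-1 * \sum_(f < 3) P e f * (\sum_(a < 3) \sum_(b < 3) x a * y b * LB a b f).
  by rewrite !sum3E !E1 !sum3E; ring.
under eq_bigr => f _ do rewrite LBc //.
have -> : \sum_(f < 3) P e f * ((tau x y + tau y x) * th f) =
  (tau x y + tau y x) * \sum_(f < 3) P e f * th f by rewrite !sum3E; ring.
by rewrite hP; ring.
Qed.


Definition D3 (x y z : 'I_3 -> R) :=
  \sum_(i < 3) \sum_(j < 3) \sum_(k < 3) x i * y j * z k * DDth i j k.

Definition N2 := \sum_(a < 3) \sum_(b < 3) \sum_(c < 3) \sum_(d < 3)
  u a * v b * v c * (\sum_(e < 3) (G1 d a e * G1 e b c - G1 d b e * G1 e a c)) * w d.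

Definition N1 := \sum_(a < 3) \sum_(b < 3) \sum_(c < 3) \sum_(d < 3)
  u a * v b * v c * (dG1 a d b c - dG1 b d a c
   + \sum_(e < 3) (G1 d a e * G0 e b c + G0 d a e * G1 e b c
                  - G1 d b e * G0 e a c - G0 d b e * G1 e a c)) * w d.

Lemma N2_0 : N2 = 0.
Proof.
have -> : N2 =
  \sum_(e < 3) (\sum_(a < 3) \sum_(d < 3) u a * w d * G1 d a e) *
               (\sum_(b < 3) \sum_(c < 3) v b * v c * G1 e b c)
  - \sum_(e < 3) (\sum_(b < 3) \sum_(d < 3) v b * w d * G1 d b e) *
               (\sum_(a < 3) \sum_(c < 3) u a * v c * G1 e a c).
  by rewrite /N2 !sum3E; ring.
under eq_bigr => e _ do rewrite (G1c hv hv).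
under [X in _ - X]eq_bigr => e _ do rewrite (G1c hu hv).
by rewrite !sum3E; ring.
Qed.

Definition T1 := \sum_(a < 3) \sum_(b < 3) \sum_(c < 3) \sum_(d < 3)
  u a * v b * v c * dG1 a d b c * w d.
Definition T2 := \sum_(b < 3) \sum_(a < 3) \sum_(c < 3) \sum_(d < 3)
  u a * v b * v c * dG1 b d a c * w d.
Definition T3 := \sum_(e < 3) (\sum_(a < 3) \sum_(d < 3) u a * w d * G1 d a e) *
  (\sum_(b < 3) \sum_(c < 3) v b * v c * G0 e b c).
Definition T4 := \sum_(e < 3) (\sum_(a < 3) \sum_(d < 3) u a * w d * G0 d a e) *
  (\sum_(b < 3) \sum_(c < 3) v b * v c * G1 e b c).
Definition T5 := \sum_(e < 3) (\sum_(b < 3) \sum_(d < 3) v b * w d * G1 d b e) *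
  (\sum_(a < 3) \sum_(c < 3) u a * v c * G0 e a c).
Definition T6 := \sum_(e < 3) (\sum_(b < 3) \sum_(d < 3) v b * w d * G0 d b e) *
  (\sum_(a < 3) \sum_(c < 3) u a * v c * G1 e a c).

Definition S4 (F : 'I_3 -> 'I_3 -> 'I_3 -> 'I_3 -> R) :=
  \sum_(a < 3) \sum_(b < 3) \sum_(c < 3) \sum_(d < 3) F a b c d.

Lemma S4_ext F G : (forall a b c d, F a b c d = G a b c d) -> S4 F = S4 G.
Proof.
move=> h; apply: eq_bigr => a _; apply: eq_bigr => b _; apply: eq_bigr => c _.
by apply: eq_bigr => d _.
Qed.

Lemma S4D F G : S4 (fun a b c d => F a b c d + G a b c d) = S4 F + S4 G.
Proof. by rewrite /S4 !sum3E; ring. Qed.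
Lemma S4B F G : S4 (fun a b c d => F a b c d - G a b c d) = S4 F - S4 G.
Proof. by rewrite /S4 !sum3E; ring. Qed.

Lemma N1_split : N1 = T1 - T2 + T3 + T4 - T5 - T6.
Proof.
have -> : N1 = S4 (fun a b c d =>
    u a * v b * v c * dG1 a d b c * w d - u a * v b * v c * dG1 b d a c * w d
  + u a * v b * v c * (\sum_(e < 3) G1 d a e * G0 e b c) * w d
  + u a * v b * v c * (\sum_(e < 3) G0 d a e * G1 e b c) * w d
  - u a * v b * v c * (\sum_(e < 3) G1 d b e * G0 e a c) * w d
  - u a * v b * v c * (\sum_(e < 3) G0 d b e * G1 e a c) * w d).
  apply: S4_ext => a b c d; rewrite !sum3E; ring.
rewrite !(S4B, S4D).
have e2 : T2 = S4 (fun a b c d => u a * v b * v c * dG1 b d a c * w d).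
  by rewrite /T2 /S4 !sum3E; ring.
have e3 : T3 = S4 (fun a b c d => u a * v b * v c * (\sum_(e < 3) G1 d a e * G0 e b c) * w d).
  by rewrite /T3 /S4 !sum3E; ring.
have e4 : T4 = S4 (fun a b c d => u a * v b * v c * (\sum_(e < 3) G0 d a e * G1 e b c) * w d).
  by rewrite /T4 /S4 !sum3E; ring.
have e5 : T5 = S4 (fun a b c d => u a * v b * v c * (\sum_(e < 3) G1 d b e * G0 e a c) * w d).
  by rewrite /T5 /S4 !sum3E; ring.
have e6 : T6 = S4 (fun a b c d => u a * v b * v c * (\sum_(e < 3) G0 d b e * G1 e a c) * w d).
  by rewrite /T6 /S4 !sum3E; ring.
by rewrite e2 e3 e4 e5 e6.
Qed.

Lemma T4_0 : T4 = 0.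
Proof.
rewrite /T4; under eq_bigr => e _ do rewrite (G1c hv hv).
by rewrite !sum3E; ring.
Qed.

Lemma T6_0 : T6 = 0.
Proof.
rewrite /T6; under eq_bigr => e _ do rewrite (G1c hu hv).
by rewrite !sum3E; ring.
Qed.

Lemma wG1 (x : 'I_3 -> R) e :
  \sum_(a < 3) \sum_(d < 3) x a * w d * G1 d a e =
  2^-1 * \sum_(a < 3) \sum_(f < 3) x a * u f * LB a e f.
Proof.
have -> : \sum_(a < 3) \sum_(d < 3) x a * w d * G1 d a e =
  2^-1 * \sum_(a < 3) \sum_(f < 3) x a * (\sum_(d < 3) w d * P d f) * LB a e f.
  by rewrite !sum3E !E1 !sum3E; ring.
by under eq_bigr => a _ do under eq_bigr => f _ do rewrite hw.
Qed.

Lemma T3_0 : T3 = 0.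
Proof.
rewrite /T3; under eq_bigr => e _ do rewrite wG1.
have H : forall e, \sum_(a < 3) \sum_(f < 3) u a * u f * LB a e f =
   2 * dot th u * \sum_(a < 3) u a * Dth e a.
  by move=> e; rewrite /dot /LB !sum3E; ring.
under eq_bigr => e _ do rewrite H hu.
by rewrite !sum3E; ring.
Qed.

Lemma T5_val : T5 = 4^-1 * (tau v u - tau u v) * (tau u v + tau v u).
Proof.
rewrite /T5; under eq_bigr => e _ do rewrite wG1.
have H : forall e, \sum_(b < 3) \sum_(f < 3) v b * u f * LB b e f =
   (tau v u - tau u v) * th e
   + dot th u * (\sum_(b < 3) v b * (Dth b e + Dth e b))
   + dot th v * (\sum_(f < 3) u f * (Dth e f - Dth f e)).
  by move=> e; rewrite /dot /LB /tau !sum3E; ring.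
under eq_bigr => e _ do rewrite H hu hv.
have -> : \sum_(e < 3) 2^-1 * ((tau v u - tau u v) * th e + 0 * \sum_(b < 3) v b * (Dth b e + Dth e b)
     + 0 * \sum_(f < 3) u f * (Dth e f - Dth f e)) *
     (\sum_(a < 3) \sum_(c < 3) u a * v c * G0 e a c) =
   2^-1 * (tau v u - tau u v) *
     \sum_(a < 3) \sum_(c < 3) u a * v c * (\sum_(e < 3) th e * G0 e a c).
  by rewrite !sum3E; ring.
under eq_bigr => a _ do under eq_bigr => c _ do rewrite E3.
have -> : \sum_(a < 3) \sum_(c < 3) u a * v c * (2^-1 * \sum_(f < 3) X0 f * LB a c f) =
   2^-1 * \sum_(f < 3) X0 f * (\sum_(a < 3) \sum_(c < 3) u a * v c * LB a c f).
  by rewrite !sum3E; ring.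
under eq_bigr => f _ do rewrite (LBc hu hv).
have -> : \sum_(f < 3) X0 f * ((tau u v + tau v u) * th f) =
   (tau u v + tau v u) * \sum_(f < 3) X0 f * th f by rewrite !sum3E; ring.
rewrite hX0.
have h2 : (2 : R) != 0 by rewrite pnatr_eq0.
have h4 : (4 : R) = 2 * 2 by rewrite -natrM.
rewrite h4 invfM; ring.
Qed.


Lemma dLBc_uvvu :
  \sum_(a < 3) \sum_(b < 3) \sum_(c < 3) \sum_(f < 3) u a * v b * v c * u f * dLB a b c f =
  2 * tau v v * tau u u + 2 * tau u v * tau v u - 2 * tau u v ^+ 2
  + dot th u * (2 * D3 u v v) + dot th v * (2 * D3 u v u - 2 * D3 u u v).
Proof. by rewrite /dLB /ddB /D3 /tau /dot !sum3E; ring. Qed.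

Lemma dLBc_vuvu :
  \sum_(b < 3) \sum_(a < 3) \sum_(c < 3) \sum_(f < 3) u a * v b * v c * u f * dLB b a c f =
  2 * tau v u ^+ 2 + dot th u * (2 * D3 v v u).
Proof. by rewrite /dLB /ddB /D3 /tau /dot !sum3E; ring. Qed.

Lemma T1_val : T1 = tau u v * tau v u - tau u v ^+ 2.
Proof.
have -> : T1 = 2^-1 * \sum_(a < 3) \sum_(f < 3) u a * (\sum_(d < 3) w d * DP a d f) *
     (\sum_(b < 3) \sum_(c < 3) v b * v c * LB b c f)
  + 2^-1 * \sum_(a < 3) \sum_(b < 3) \sum_(c < 3) \sum_(f < 3)
     u a * v b * v c * (\sum_(d < 3) w d * P d f) * dLB a b c f.
  rewrite !mulr_sumr -big_split /T1; apply: eq_bigr => a _ /=.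
  by rewrite !sum3E !E2 !sum3E; ring.
under eq_bigr => a _ do under eq_bigr => f _ do rewrite (LBc hv hv).
under [X in _ + 2^-1 * X]eq_bigr => a _ do under eq_bigr => b _ do
  under eq_bigr => c _ do under eq_bigr => f _ do rewrite hw.
rewrite dLBc_uvvu hu hv.
have -> : \sum_(a < 3) \sum_(f < 3) u a * (\sum_(d < 3) w d * DP a d f) *
     ((tau v v + tau v v) * th f) =
   (tau v v + tau v v) * \sum_(a < 3) u a * \sum_(d < 3) w d * (\sum_(f < 3) DP a d f * th f).
  by rewrite !sum3E; ring.
under eq_bigr => a _ do under eq_bigr => d _ do rewrite hDP.
have -> : \sum_(a < 3) u a * \sum_(d < 3) w d * - \sum_(f < 3) P d f * Dth a f =
   - \sum_(a < 3) \sum_(f < 3) u a * (\sum_(d < 3) w d * P d f) * Dth a f.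
  by rewrite !sum3E; ring.
under eq_bigr => a _ do under eq_bigr => f _ do rewrite hw.
rewrite /tau.
have h2 : (2 : R) != 0 by rewrite pnatr_eq0.
by field.
Qed.

Lemma T2_val : T2 = - 2^-1 * (tau u v * tau v u) + 2^-1 * tau v u ^+ 2.
Proof.
have -> : T2 = 2^-1 * \sum_(b < 3) \sum_(f < 3) v b * (\sum_(d < 3) w d * DP b d f) *
     (\sum_(a < 3) \sum_(c < 3) u a * v c * LB a c f)
  + 2^-1 * \sum_(b < 3) \sum_(a < 3) \sum_(c < 3) \sum_(f < 3)
     u a * v b * v c * (\sum_(d < 3) w d * P d f) * dLB b a c f.
  rewrite !mulr_sumr -big_split /T2 /=; apply: eq_bigr => b _.
  by rewrite !sum3E !E2 !sum3E; ring.
under eq_bigr => a _ do under eq_bigr => f _ do rewrite (LBc hu hv).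
under [X in _ + 2^-1 * X]eq_bigr => a _ do under eq_bigr => b _ do
  under eq_bigr => c _ do under eq_bigr => f _ do rewrite hw.
rewrite dLBc_vuvu hu.
have -> : \sum_(b < 3) \sum_(f < 3) v b * (\sum_(d < 3) w d * DP b d f) *
     ((tau u v + tau v u) * th f) =
   (tau u v + tau v u) * \sum_(b < 3) v b * \sum_(d < 3) w d * (\sum_(f < 3) DP b d f * th f).
  by rewrite !sum3E; ring.
under eq_bigr => a _ do under eq_bigr => d _ do rewrite hDP.
have -> : \sum_(a < 3) v a * \sum_(d < 3) w d * - \sum_(f < 3) P d f * Dth a f =
   - \sum_(a < 3) \sum_(f < 3) v a * (\sum_(d < 3) w d * P d f) * Dth a f.
  by rewrite !sum3E; ring.
under eq_bigr => a _ do under eq_bigr => f _ do rewrite hw.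
rewrite /tau.
have h2 : (2 : R) != 0 by rewrite pnatr_eq0.
by field.
Qed.

Lemma N1_val : N1 = - (3 / 4) * (tau u v - tau v u) ^+ 2.
Proof.
rewrite N1_split T1_val T2_val T3_0 T4_0 T5_val T6_0.
have h2 : (2 : R) != 0 by rewrite pnatr_eq0.
have h4 : (4 : R) = 2 * 2 by rewrite -natrM.
rewrite h4; by field.
Qed.

End Core.

Lemma eq_by_cert (R : ringType) (x y k z : R) : z = 1 -> x = y + (z - 1) * k -> x = y.
Proof. by move=> -> ->; rewrite subrr mul0r addr0. Qed.

Section RmAlg.
Variable R : realFieldType.
Variables (s t : R) (G1 G0 Gm : 'I_3 -> 'I_3 -> 'I_3 -> R).
Variables (dG1 dG0 dGm : 'I_3 -> 'I_3 -> 'I_3 -> 'I_3 -> R).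

Definition rr2 d a b c := \sum_(e < 3) (G1 d a e * G1 e b c - G1 d b e * G1 e a c).
Definition rr1 d a b c := dG1 a d b c - dG1 b d a c
   + \sum_(e < 3) (G1 d a e * G0 e b c + G0 d a e * G1 e b c
                  - G1 d b e * G0 e a c - G0 d b e * G1 e a c).
Definition rr0 d a b c := dG0 a d b c - dG0 b d a c
   + \sum_(e < 3) (G0 d a e * G0 e b c + G1 d a e * Gm e b c + Gm d a e * G1 e b c
                  - G0 d b e * G0 e a c - G1 d b e * Gm e a c - Gm d b e * G1 e a c).
Definition rrm1 d a b c := dGm a d b c - dGm b d a c
   + \sum_(e < 3) (G0 d a e * Gm e b c + Gm d a e * G0 e b c
                  - G0 d b e * Gm e a c - Gm d b e * G0 e a c).
Definition rrm2 d a b c := \sum_(e < 3) (Gm d a e * Gm e b c - Gm d b e * Gm e a c).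

Lemma Rm_alg d a b c : s * t = 1 ->
  (s * dG1 a d b c + dG0 a d b c + t * dGm a d b c)
  - (s * dG1 b d a c + dG0 b d a c + t * dGm b d a c)
  + \sum_(e < 3) ((s * G1 d a e + G0 d a e + t * Gm d a e) * (s * G1 e b c + G0 e b c + t * Gm e b c)
               - (s * G1 d b e + G0 d b e + t * Gm d b e) * (s * G1 e a c + G0 e a c + t * Gm e a c))
  = s ^+ 2 * rr2 d a b c + s * rr1 d a b c + rr0 d a b c + t * rrm1 d a b c
    + t ^+ 2 * rrm2 d a b c.
Proof.
move=> st.
set K := \sum_(e < 3) (G1 d a e * Gm e b c + Gm d a e * G1 e b c
                  - G1 d b e * Gm e a c - Gm d b e * G1 e a c).
apply: (eq_by_cert (k := K) st).
by rewrite /K /rr2 /rr1 /rr0 /rrm1 /rrm2 !sum3E; ring.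
Qed.
End RmAlg.

Section S4Alg.
Variable R : realFieldType.
Variables (s t : R) (K F2 F1 F0 Fm1 Fm2 : 'I_3 -> 'I_3 -> 'I_3 -> 'I_3 -> R) (w : 'I_3 -> R).
Definition S4w (F : 'I_3 -> 'I_3 -> 'I_3 -> 'I_3 -> R) :=
  \sum_(a < 3) \sum_(b < 3) \sum_(c < 3) \sum_(d < 3) K a b c d * F a b c d * w d.
Lemma S4_split :
  \sum_(a < 3) \sum_(b < 3) \sum_(c < 3) \sum_(d < 3)
    K a b c d * (s ^+ 2 * F2 a b c d + s * F1 a b c d + F0 a b c d + t * Fm1 a b c d
                 + t ^+ 2 * Fm2 a b c d) * w d
  = s ^+ 2 * S4w F2 + s * S4w F1 + S4w F0 + t * S4w Fm1 + t ^+ 2 * S4w Fm2.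
Proof.
have L5 : forall (H2 H1 H0 Hm1 Hm2 : 'I_3 -> R),
  s ^+ 2 * \sum_(i < 3) H2 i + s * \sum_(i < 3) H1 i + \sum_(i < 3) H0 i
  + t * \sum_(i < 3) Hm1 i + t ^+ 2 * \sum_(i < 3) Hm2 i =
  \sum_(i < 3) (s ^+ 2 * H2 i + s * H1 i + H0 i + t * Hm1 i + t ^+ 2 * Hm2 i).
  by move=> *; rewrite !sum3E; ring.
rewrite /S4w L5; apply: eq_bigr => a _; rewrite L5; apply: eq_bigr => b _.
rewrite L5; apply: eq_bigr => c _; rewrite L5; apply: eq_bigr => d _; ring.
Qed.
End S4Alg.

Section SmallAlg.
Variable R : realFieldType.

Definition m3 (x y : 'I_3 -> R) := \sum_(i < 3) x i * y i.

Lemma alg_hDP (th X1 X2 dX1 dX2 Dx : 'I_3 -> R) c :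
  m3 X1 th = 0 -> m3 X2 th = 0 ->
  \sum_(f < 3) (X1 f * Dx f + th f * dX1 f) = 0 ->
  \sum_(f < 3) (X2 f * Dx f + th f * dX2 f) = 0 ->
  \sum_(f < 3) ((X1 c * dX1 f + X1 f * dX1 c) + (X2 c * dX2 f + X2 f * dX2 c)) * th f
  = - \sum_(f < 3) (X1 c * X1 f + X2 c * X2 f) * Dx f.
Proof.
move=> h1 h2 r1 r2.
have -> : \sum_(f < 3) ((X1 c * dX1 f + X1 f * dX1 c) + (X2 c * dX2 f + X2 f * dX2 c)) * th f
  = - \sum_(f < 3) (X1 c * X1 f + X2 c * X2 f) * Dx f
    + X1 c * \sum_(f < 3) (X1 f * Dx f + th f * dX1 f) + dX1 c * m3 X1 th
    + X2 c * \sum_(f < 3) (X2 f * Dx f + th f * dX2 f) + dX2 c * m3 X2 th.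
  by rewrite /m3 !sum3E; ring.
by rewrite h1 h2 r1 r2; ring.
Qed.

Lemma alg_hw (X1 X2 H1 H2 u : 'I_3 -> R) (s1 t1 : R) f :
  (forall e, u e = s1 * X1 e + t1 * X2 e) ->
  m3 X1 H1 = 1 -> m3 X1 H2 = 0 -> m3 X2 H1 = 0 -> m3 X2 H2 = 1 ->
  \sum_(d < 3) (\sum_(e < 3) (H1 d * H1 e + H2 d * H2 e) * u e) * (X1 d * X1 f + X2 d * X2 f)
  = u f.
Proof.
move=> hu m11 m12 m21 m22.
have -> : \sum_(d < 3) (\sum_(e < 3) (H1 d * H1 e + H2 d * H2 e) * u e) * (X1 d * X1 f + X2 d * X2 f)
  = (s1 * m3 X1 H1 + t1 * m3 X2 H1) * (m3 X1 H1 * X1 f + m3 X2 H1 * X2 f)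
  + (s1 * m3 X1 H2 + t1 * m3 X2 H2) * (m3 X1 H2 * X1 f + m3 X2 H2 * X2 f).
  by rewrite /m3 !sum3E !hu; ring.
by rewrite m11 m12 m21 m22 hu; ring.
Qed.

Lemma alg_E3 (th X0 X1 X2 LA LBv : 'I_3 -> R) :
  m3 X0 th = 1 -> m3 X1 th = 0 -> m3 X2 th = 0 ->
  \sum_(e < 3) th e * (2^-1 * \sum_(d < 3) ((X1 e * X1 d + X2 e * X2 d) * LA d
      + X0 e * X0 d * LBv d))
  = 2^-1 * \sum_(d < 3) X0 d * LBv d.
Proof.
move=> h0 h1 h2.
have -> : \sum_(e < 3) th e * (2^-1 * \sum_(d < 3) ((X1 e * X1 d + X2 e * X2 d) * LA d
      + X0 e * X0 d * LBv d))
  = 2^-1 * \sum_(d < 3) ((m3 X1 th * X1 d + m3 X2 th * X2 d) * LA d + m3 X0 th * X0 d * LBv d).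
  by rewrite /m3 !sum3E; ring.
by rewrite h0 h1 h2; apply: congr1; apply: eq_bigr => d _; ring.
Qed.

Lemma alg_dot (th X1 X2 u : 'I_3 -> R) (s1 t1 : R) :
  (forall e, u e = s1 * X1 e + t1 * X2 e) -> m3 X1 th = 0 -> m3 X2 th = 0 ->
  \sum_(i < 3) th i * u i = 0.
Proof.
move=> hu h1 h2.
have -> : \sum_(i < 3) th i * u i = s1 * m3 X1 th + t1 * m3 X2 th.
  by rewrite /m3 !sum3E !hu; ring.
by rewrite h1 h2; ring.
Qed.


Lemma alg_hP (X1 X2 th : 'I_3 -> R) c : m3 X1 th = 0 -> m3 X2 th = 0 ->
  \sum_(f < 3) (X1 c * X1 f + X2 c * X2 f) * th f = 0.
Proof.
move=> h1 h2.
have -> : \sum_(f < 3) (X1 c * X1 f + X2 c * X2 f) * th f = X1 c * m3 X1 th + X2 c * m3 X2 th.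
  by rewrite /m3 !sum3E; ring.
by rewrite h1 h2; ring.
Qed.

Lemma ab8 (P1 P2 P3 P4 P5 P6 P7 P8 : R) :
  (P1 * P2 + P3 * P4) + (P5 * P6 + P7 * P8) = P4 * P3 + P1 * P2 + P8 * P7 + P5 * P6.
Proof. ring. Qed.

Lemma alg_inner (K s thd : R) (A th u : 'I_3 -> R) : \sum_(e < 3) th e * u e = 0 ->
  \sum_(e < 3) K * (A e + s * (thd * th e)) * u e = K * \sum_(e < 3) A e * u e.
Proof.
move=> h.
have -> : \sum_(e < 3) K * (A e + s * (thd * th e)) * u e =
  K * \sum_(e < 3) A e * u e + K * s * thd * \sum_(e < 3) th e * u e.
  by rewrite !sum3E; ring.
by rewrite h; ring.
Qed.

Lemma alg_gdot (H1 H2 th X1 X2 x y : 'I_3 -> R) (s a1 b1 a2 b2 : R) :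
  (forall e, x e = a1 * X1 e + b1 * X2 e) -> (forall e, y e = a2 * X1 e + b2 * X2 e) ->
  m3 X1 H1 = 1 -> m3 X1 H2 = 0 -> m3 X2 H1 = 0 -> m3 X2 H2 = 1 ->
  m3 X1 th = 0 -> m3 X2 th = 0 ->
  \sum_(k < 3) (\sum_(j < 3) x j * ((H1 j * H1 k + H2 j * H2 k) + s * (th j * th k))) * y k
  = a1 * a2 + b1 * b2.
Proof.
move=> hx hy m11 m12 m21 m22 m1 m2.
have -> : \sum_(k < 3) (\sum_(j < 3) x j * ((H1 j * H1 k + H2 j * H2 k) + s * (th j * th k))) * y k
  = (a1 * m3 X1 H1 + b1 * m3 X2 H1) * (a2 * m3 X1 H1 + b2 * m3 X2 H1)
  + (a1 * m3 X1 H2 + b1 * m3 X2 H2) * (a2 * m3 X1 H2 + b2 * m3 X2 H2)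
  + s * (a1 * m3 X1 th + b1 * m3 X2 th) * (a2 * m3 X1 th + b2 * m3 X2 th).
  by rewrite /m3 !sum3E !hx !hy; ring.
by rewrite m11 m12 m21 m22 m1 m2; ring.
Qed.

Lemma alg_tau (D : 'I_3 -> 'I_3 -> R) (X1 X2 x y : 'I_3 -> R) (a1 b1 a2 b2 : R) :
  (forall e, x e = a1 * X1 e + b1 * X2 e) -> (forall e, y e = a2 * X1 e + b2 * X2 e) ->
  tau D x y - tau D y x = (a1 * b2 - b1 * a2) * (tau D X1 X2 - tau D X2 X1).
Proof. by move=> hx hy; rewrite /tau !sum3E !hx !hy; ring. Qed.

Lemma alg_c (th X1 X2 : 'I_3 -> R) (D dX1 dX2 : 'I_3 -> 'I_3 -> R) :
  (forall a, \sum_(f < 3) (X1 f * D a f + th f * dX1 a f) = 0) ->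
  (forall a, \sum_(f < 3) (X2 f * D a f + th f * dX2 a f) = 0) ->
  \sum_(k < 3) (\sum_(a < 3) (X2 a * dX1 a k - X1 a * dX2 a k)) * th k
  = tau D X1 X2 - tau D X2 X1.
Proof.
move=> h1 h2.
have -> : \sum_(k < 3) (\sum_(a < 3) (X2 a * dX1 a k - X1 a * dX2 a k)) * th k
  = tau D X1 X2 - tau D X2 X1
    + \sum_(a < 3) X2 a * (\sum_(f < 3) (X1 f * D a f + th f * dX1 a f))
    - \sum_(a < 3) X1 a * (\sum_(f < 3) (X2 f * D a f + th f * dX2 a f)).
  by rewrite /tau !sum3E; ring.
have z1 : \sum_(a < 3) X2 a * (\sum_(f < 3) (X1 f * D a f + th f * dX1 a f)) = 0.
  by apply: big1 => a _; rewrite h1 mulr0.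
have z2 : \sum_(a < 3) X1 a * (\sum_(f < 3) (X2 f * D a f + th f * dX2 a f)) = 0.
  by apply: big1 => a _; rewrite h2 mulr0.
by rewrite z1 z2; ring.
Qed.

End SmallAlg.

Section PD.
Variable R : realType.
Local Notation V := 'rV[R]_3.

Lemma pdD (a : 'I_3) (f g : V -> R) x : derivable f x (ee R a) -> derivable g x (ee R a) ->
  pd a (fun y => f y + g y) x = pd a f x + pd a g x.
Proof. by move=> df dg; exact: (deriveD df dg). Qed.

Lemma pdB (a : 'I_3) (f g : V -> R) x : derivable f x (ee R a) -> derivable g x (ee R a) ->
  pd a (fun y => f y - g y) x = pd a f x - pd a g x.
Proof. by move=> df dg; exact: (deriveB df dg). Qed.

Lemma pdM (a : 'I_3) (f g : V -> R) x : derivable f x (ee R a) -> derivable g x (ee R a) ->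
  pd a (fun y => f y * g y) x = f x * pd a g x + g x * pd a f x.
Proof. by move=> df dg; exact: (deriveM df dg). Qed.

Lemma pdMl (a : 'I_3) (c : R) (f : V -> R) x : derivable f x (ee R a) ->
  pd a (fun y => c * f y) x = c * pd a f x.
Proof. by move=> df; exact: (deriveMl c df). Qed.

Lemma pd_cst (a : 'I_3) (c : R) x : pd a (fun=> c) x = 0.
Proof. exact: derive_cst. Qed.

Lemma pd_sum (a : 'I_3) (F : 'I_3 -> V -> R) x :
  (forall i, derivable (F i) x (ee R a)) ->
  pd a (fun y => \sum_(i < 3) F i y) x = \sum_(i < 3) pd a (F i) x.
Proof. by move=> h; rewrite /pd -fct_sumE; exact: derive_sum. Qed.

Lemma pd_near (U : set V) (a : 'I_3) (f g : V -> R) x : open U -> U x ->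
  (forall y, U y -> f y = g y) -> pd a f x = pd a g x.
Proof.
move=> oU Ux fg; rewrite /pd; apply: near_eq_derive.
by apply: filterS (nearU oU Ux) => y Uy; exact: fg.
Qed.
End PD.

Section Geo.
Variable R : realType.
Local Notation V := 'rV[R]_3.
Variables (U : set V) (X : 'I_3 -> V -> V).
Hypothesis oU : open U.
Hypothesis hX : forall i, vsmooth_on U (X i).
Hypothesis hunit : forall x, U x -> frameM X x \in unitmx.

Definition Hm y := invmx (frameM X y).
Definition th y a := Hm y a 0.
Definition Af y b d := Hm y b 1 * Hm y d 1 + Hm y b 2 * Hm y d 2.
Definition Bf y b d := th y b * th y d.
Definition Pf y c d := X 1 y 0 c * X 1 y 0 d + X 2 y 0 c * X 2 y 0 d.
Definition Qf y c d := X 0 y 0 c * X 0 y 0 d.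
Definition LAf y a b d := pd a (fun z => Af z b d) y + pd b (fun z => Af z a d) y
  - pd d (fun z => Af z a b) y.
Definition LBf y a b d := pd a (fun z => Bf z b d) y + pd b (fun z => Bf z a d) y
  - pd d (fun z => Bf z a b) y.
Definition G1f y c a b := 2^-1 * \sum_(d < 3) Pf y c d * LBf y a b d.
Definition G0f y c a b := 2^-1 * \sum_(d < 3) (Pf y c d * LAf y a b d + Qf y c d * LBf y a b d).
Definition Gmf y c a b := 2^-1 * \sum_(d < 3) Qf y c d * LAf y a b d.

Lemma cX i c : Cinf U (fun y => X i y 0 c).
Proof. exact: (hX i c). Qed.

Lemma cH a j : Cinf U (fun y => Hm y a j).
Proof.
apply: (Cinf_invmx oU hunit) => i k.
by apply: (Cinf_ext oU (cX i k)) => y _; rewrite mxE.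
Qed.

Lemma cth a : Cinf U (fun y => th y a). Proof. exact: cH. Qed.

Lemma cA b d : Cinf U (fun y => Af y b d).
Proof. by rewrite /Af; apply: (Cinf_add oU); apply: (Cinf_mul oU); exact: cH. Qed.
Lemma cB b d : Cinf U (fun y => Bf y b d).
Proof. by rewrite /Bf; apply: (Cinf_mul oU); exact: cth. Qed.
Lemma cP c d : Cinf U (fun y => Pf y c d).
Proof. by rewrite /Pf; apply: (Cinf_add oU); apply: (Cinf_mul oU); exact: cX. Qed.
Lemma cQ c d : Cinf U (fun y => Qf y c d).
Proof. by rewrite /Qf; apply: (Cinf_mul oU); exact: cX. Qed.
Lemma cLA a b d : Cinf U (fun y => LAf y a b d).
Proof. by rewrite /LAf; apply: (Cinf_sub oU); [apply: (Cinf_add oU)|]; apply: Cinf_pd; exact: cA. Qed.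
Lemma cLB a b d : Cinf U (fun y => LBf y a b d).
Proof. by rewrite /LBf; apply: (Cinf_sub oU); [apply: (Cinf_add oU)|]; apply: Cinf_pd; exact: cB. Qed.
Lemma cG1 c a b : Cinf U (fun y => G1f y c a b).
Proof.
rewrite /G1f /G0f /Gmf; apply: (Cinf_mul oU); first exact: (Cinf_cst oU).
apply: (Cinf_sum oU) => d _; apply: (Cinf_mul oU); [exact: cP|exact: cLB].
Qed.
Lemma cG0 c a b : Cinf U (fun y => G0f y c a b).
Proof.
rewrite /G1f /G0f /Gmf; apply: (Cinf_mul oU); first exact: (Cinf_cst oU).
apply: (Cinf_sum oU) => d _; apply: (Cinf_add oU); apply: (Cinf_mul oU);
  [exact: cP|exact: cLA|exact: cQ|exact: cLB].
Qed.
Lemma cGm c a b : Cinf U (fun y => Gmf y c a b).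
Proof.
rewrite /G1f /G0f /Gmf; apply: (Cinf_mul oU); first exact: (Cinf_cst oU).
apply: (Cinf_sum oU) => d _; apply: (Cinf_mul oU); [exact: cQ|exact: cLA].
Qed.


Definition dvec (e : R) : 'rV[R]_3 := \row_i (if i == 0 then e else 1).

Lemma frameE_diag eps y : frameE X eps y = diag_mx (dvec eps) *m frameM X y.
Proof. by apply/matrixP => i j; rewrite mul_diag_mx !mxE. Qed.

Lemma invE eps y : eps != 0 -> U y ->
  invmx (frameE X eps y) = Hm y *m diag_mx (dvec eps^-1).
Proof.
move=> e0 Uy.
have EK : frameE X eps y *m (Hm y *m diag_mx (dvec eps^-1)) = 1%:M.
  rewrite frameE_diag -mulmxA (mulmxA (frameM X y)) /Hm mulmxV ?hunit // mul1mx.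
  apply/matrixP => i j; rewrite mul_diag_mx !mxE.
  have [->|ij] := eqVneq i j; last by rewrite mulr0n mulr0.
  by rewrite ?eqxx !mulr1n; case: ifP => _; [rewrite mulfV|rewrite mulr1].
have [uE _] := mulmx1_unit EK.
by rewrite -[invmx _]mulmx1 -EK mulmxA mulVmx // mul1mx.
Qed.

Lemma Gm_dec eps y b d : eps != 0 -> U y ->
  Gm X eps y b d = Af y b d + (eps ^+ 2)^-1 * Bf y b d.
Proof.
move=> e0 Uy; rewrite /Gm invE // mul_mx_diag !mxE sum3E !mxE /=.
rewrite /Af /Bf /th -exprVn; ring.
Qed.

Lemma Ginv_dec eps y c d : Ginv X eps y c d = Pf y c d + eps ^+ 2 * Qf y c d.
Proof. by rewrite /Ginv !mxE sum3E !mxE /= /Pf /Qf; ring. Qed.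

Lemma pdGm eps y (a b d : 'I_3) : eps != 0 -> U y ->
  pd a (fun z => Gm X eps z b d) y =
  pd a (fun z => Af z b d) y + (eps ^+ 2)^-1 * pd a (fun z => Bf z b d) y.
Proof.
move=> e0 Uy.
rewrite (@pd_near _ U a _ (fun z => Af z b d + (eps ^+ 2)^-1 * Bf z b d)) //; last first.
  by move=> z Uz; exact: Gm_dec.
rewrite pdD; first by rewrite pdMl //; exact: Cinf_der (cB b d) Uy.
  exact: Cinf_der (cA b d) Uy.
apply: Cinf_der Uy; apply: (Cinf_mul oU (Cinf_cst oU _)); exact: cB.
Qed.

Lemma Gam_dec eps y c a b : eps != 0 -> U y ->
  Gam X eps c a b y = (eps ^+ 2)^-1 * G1f y c a b + G0f y c a b + eps ^+ 2 * Gmf y c a b.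
Proof.
move=> e0 Uy.
have st : eps ^+ 2 * (eps ^+ 2)^-1 = 1 by rewrite mulfV // expf_neq0.
have h : forall d, Ginv X eps y c d * (pd a (fun z => Gm X eps z b d) y
      + pd b (fun z => Gm X eps z a d) y - pd d (fun z => Gm X eps z a b) y) =
    (Pf y c d * LAf y a b d + Qf y c d * LBf y a b d)
    + (eps ^+ 2)^-1 * (Pf y c d * LBf y a b d) + eps ^+ 2 * (Qf y c d * LAf y a b d).
  move=> d; rewrite !pdGm // Ginv_dec /LAf /LBf.
  set t := eps ^+ 2; set s := t^-1; set x1 := pd a _ y; set x2 := pd b _ y.
  set x3 := pd d _ y; set y1 := pd a _ y; set y2 := pd b _ y; set y3 := pd d _ y.
  have -> : (Pf y c d + t * Qf y c d) * (x1 + s * y1 + (x2 + s * y2) - (x3 + s * y3)) =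
    (Pf y c d * (x1 + x2 - x3) + Qf y c d * (y1 + y2 - y3)) + s * (Pf y c d * (y1 + y2 - y3))
    + t * (Qf y c d * (x1 + x2 - x3)) + (t * s - 1) * (Qf y c d * (y1 + y2 - y3)) by ring.
  by rewrite st subrr mul0r addr0.
rewrite /Gam; under eq_bigr => d _ do rewrite h.
rewrite /G1f /G0f /Gmf !mulr_sumr -!big_split /=; apply: eq_bigr => d _.
move: (Pf y c d) (Qf y c d) (LAf y a b d) (LBf y a b d) => p q la lb; ring.
Qed.

Lemma dGam_dec eps (x c a b : 'I_3) y : eps != 0 -> U y ->
  pd x (Gam X eps c a b) y =
  (eps ^+ 2)^-1 * pd x (fun z => G1f z c a b) y + pd x (fun z => G0f z c a b) y
  + eps ^+ 2 * pd x (fun z => Gmf z c a b) y.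
Proof.
move=> e0 Uy.
rewrite (@pd_near _ U x _ (fun z => (eps ^+ 2)^-1 * G1f z c a b + G0f z c a b
   + eps ^+ 2 * Gmf z c a b)) //; last by move=> z Uz; exact: Gam_dec.
have dG1 : derivable (fun z => G1f z c a b) y (ee R x) := @Cinf_der _ _ x _ _ (cG1 c a b) Uy.
have dG0 : derivable (fun z => G0f z c a b) y (ee R x) := @Cinf_der _ _ x _ _ (cG0 c a b) Uy.
have dGm : derivable (fun z => Gmf z c a b) y (ee R x) := @Cinf_der _ _ x _ _ (cGm c a b) Uy.
have dsG1 : derivable (fun z => (eps ^+ 2)^-1 * G1f z c a b) y (ee R x) :=
  @Cinf_der _ _ x _ _ (Cinf_mul oU (Cinf_cst oU _) (cG1 c a b)) Uy.
have dtGm : derivable (fun z => eps ^+ 2 * Gmf z c a b) y (ee R x) :=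
  @Cinf_der _ _ x _ _ (Cinf_mul oU (Cinf_cst oU _) (cGm c a b)) Uy.
rewrite pdD; [|exact: derivableD dsG1 dG0|exact: dtGm].
rewrite pdD; [|exact: dsG1|exact: dG0].
by rewrite (pdMl _ dG1) (pdMl _ dGm).
Qed.


Section AtP.
Variable p : V.
Hypothesis Up : U p.

Lemma mF i j : \sum_(e < 3) X i p 0 e * Hm p e j = (i == j)%:R.
Proof.
have := congr1 (fun M : 'M[R]_3 => M i j) (mulmxV (hunit Up)).
by rewrite /= !mxE => <-; apply: eq_bigr => e _; rewrite mxE.
Qed.

Lemma mFy y i j : U y -> \sum_(e < 3) X i y 0 e * Hm y e j = (i == j)%:R.
Proof.
move=> Uy; have := congr1 (fun M : 'M[R]_3 => M i j) (mulmxV (hunit Uy)).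
by rewrite /= !mxE => <-; apply: eq_bigr => e _; rewrite mxE.
Qed.

Lemma Rel i (x : 'I_3) : \sum_(f < 3) (X i p 0 f * pd x (fun y => th y f) p
    + th p f * pd x (fun y => X i y 0 f) p) = 0.
Proof.
have h : pd x (fun y => \sum_(f < 3) X i y 0 f * th y f) p = 0.
  rewrite (@pd_near _ U x _ (fun=> (i == 0)%:R)) //; first exact: pd_cst.
  by move=> y Uy; rewrite /th mFy.
apply: (etrans _ h); rewrite pd_sum; last first.
  move=> f; apply: (Cinf_der (Cinf_mul oU (cX i f) (cth f)) Up).
apply: eq_bigr => f _; rewrite pdM //.
- exact: (Cinf_der (cX i f) Up).
- exact: (Cinf_der (cth f) Up).
Qed.

Lemma pdBf (y : V) (a b f : 'I_3) : U y ->
  pd a (fun z => Bf z b f) y =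
  pd a (fun z => th z b) y * th y f + th y b * pd a (fun z => th z f) y.
Proof.
move=> Uy; rewrite /Bf pdM; last 2 first.
- exact: (Cinf_der (cth b) Uy).
- exact: (Cinf_der (cth f) Uy).
by rewrite addrC mulrC.
Qed.

Definition thv a := th p a.
Definition X0v a := X 0 p 0 a.
Definition Dthv (a c : 'I_3) := pd a (fun y => th y c) p.
Definition DDthv (x a b : 'I_3) := pd x (fun y => pd a (fun z => th z b) y) p.
Definition Pv c d := Pf p c d.
Definition DPv (x c d : 'I_3) := pd x (fun y => Pf y c d) p.
Definition g1 c a b := G1f p c a b.
Definition g0 c a b := G0f p c a b.
Definition gm c a b := Gmf p c a b.
Definition dg1 (x c a b : 'I_3) := pd x (fun y => G1f y c a b) p.
Definition dg0 (x c a b : 'I_3) := pd x (fun y => G0f y c a b) p.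
Definition dgm (x c a b : 'I_3) := pd x (fun y => Gmf y c a b) p.

Lemma LBf_eq a b f : LBf p a b f = LB thv Dthv a b f.
Proof. by rewrite /LBf !pdBf. Qed.

Lemma E1p c a b : g1 c a b = 2^-1 * \sum_(f < 3) Pv c f * LB thv Dthv a b f.
Proof. by rewrite /g1 /G1f; congr (_ * _); apply: eq_bigr => f _; rewrite LBf_eq. Qed.


Lemma m3X i j : m3 (fun e => X i p 0 e) (fun e => Hm p e j) = (i == j)%:R.
Proof. exact: mF. Qed.

Lemma ddBf_eq (x a b f : 'I_3) :
  pd x (fun y => pd a (fun z => Bf z b f) y) p = ddB thv Dthv DDthv x a b f.
Proof.
rewrite (@pd_near _ U x _ (fun y => pd a (fun z => th z b) y * th y f
    + th y b * pd a (fun z => th z f) y)) //; last by move=> y Uy; rewrite pdBf.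
have d1 := @Cinf_der _ _ x _ _ (Cinf_pd a (cth b)) Up.
have d2 := @Cinf_der _ _ x _ _ (Cinf_pd a (cth f)) Up.
have d3 := @Cinf_der _ _ x _ _ (cth b) Up.
have d4 := @Cinf_der _ _ x _ _ (cth f) Up.
rewrite pdD; last 2 first.
- exact: derivableM d1 d4.
- exact: derivableM d3 d2.
rewrite (pdM d1 d4) (pdM d3 d2).
by rewrite /ddB /thv /Dthv /DDthv ab8.
Qed.

Lemma dLBf_eq (x a b f : 'I_3) :
  pd x (fun y => LBf y a b f) p = dLB thv Dthv DDthv x a b f.
Proof.
have d1 := @Cinf_der _ _ x _ _ (Cinf_pd a (cB b f)) Up.
have d2 := @Cinf_der _ _ x _ _ (Cinf_pd b (cB a f)) Up.
have d3 := @Cinf_der _ _ x _ _ (Cinf_pd f (cB a b)) Up.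
rewrite /LBf pdB; last 2 first.
- exact: derivableD d1 d2.
- exact: d3.
by rewrite (pdD d1 d2) /dLB !ddBf_eq.
Qed.

Lemma E2p (x c a b : 'I_3) : dg1 x c a b =
  2^-1 * \sum_(f < 3) (DPv x c f * LB thv Dthv a b f + Pv c f * dLB thv Dthv DDthv x a b f).
Proof.
have hd : forall f, derivable (fun y => Pf y c f * LBf y a b f) p (ee R x).
  by move=> f; apply: (Cinf_der (Cinf_mul oU (cP c f) (cLB a b f)) Up).
rewrite /dg1 /G1f pdMl; last first.
  by apply: (Cinf_der _ Up); apply: (Cinf_sum oU) => f _; exact: (Cinf_mul oU (cP c f) (cLB a b f)).
congr (_ * _); rewrite pd_sum //; apply: eq_bigr => f _.
rewrite pdM; last 2 first.
- exact: (Cinf_der (cP c f) Up).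
- exact: (Cinf_der (cLB a b f) Up).
by rewrite dLBf_eq LBf_eq addrC mulrC.
Qed.

Lemma E3p (a b : 'I_3) : \sum_(e < 3) thv e * g0 e a b =
  2^-1 * \sum_(f < 3) X0v f * LB thv Dthv a b f.
Proof.
have := @alg_E3 _ thv X0v (fun e => X 1 p 0 e) (fun e => X 2 p 0 e)
  (fun d => LAf p a b d) (fun d => LBf p a b d) (mF 0 0) (mF 1 0) (mF 2 0).
rewrite /= => H.
rewrite /g0 /G0f /Pf /Qf H; congr (_ * _); apply: eq_bigr => f _.
by rewrite LBf_eq.
Qed.

Lemma hPp c : \sum_(f < 3) Pv c f * thv f = 0.
Proof. exact: (alg_hP c (mF 1 0) (mF 2 0)). Qed.

Lemma DPv_eq (x c f : 'I_3) : DPv x c f =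
  (X 1 p 0 c * pd x (fun y => X 1 y 0 f) p + X 1 p 0 f * pd x (fun y => X 1 y 0 c) p)
  + (X 2 p 0 c * pd x (fun y => X 2 y 0 f) p + X 2 p 0 f * pd x (fun y => X 2 y 0 c) p).
Proof.
have d i k := @Cinf_der _ _ x _ _ (cX i k) Up.
rewrite /DPv /Pf pdD; last 2 first.
- exact: derivableM (d 1 c) (d 1 f).
- exact: derivableM (d 2 c) (d 2 f).
by rewrite (pdM (d 1 c) (d 1 f)) (pdM (d 2 c) (d 2 f)).
Qed.

Lemma hDPp (x c : 'I_3) : \sum_(f < 3) DPv x c f * thv f = - \sum_(f < 3) Pv c f * Dthv x f.
Proof.
under eq_bigr => f _ do rewrite DPv_eq.
exact: (alg_hDP c (mF 1 0) (mF 2 0) (Rel 1 x) (Rel 2 x)).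
Qed.

Lemma hX0p : \sum_(f < 3) X0v f * thv f = 1.
Proof. exact: (mF 0 0). Qed.


Lemma Rm_dec eps (d a b c : 'I_3) : eps != 0 ->
  Rm X eps d a b c p =
    ((eps ^+ 2)^-1) ^+ 2 * rr2 g1 d a b c + (eps ^+ 2)^-1 * rr1 g1 g0 dg1 d a b c
    + rr0 g1 g0 gm dg0 d a b c + eps ^+ 2 * rrm1 g0 gm dgm d a b c
    + (eps ^+ 2) ^+ 2 * rrm2 gm d a b c.
Proof.
move=> e0; rewrite /Rm !dGam_dec //.
under eq_bigr => e _ do rewrite !Gam_dec //.
apply: (Rm_alg g1 g0 gm dg1 dg0 dgm).
by rewrite mulVf // expf_neq0.
Qed.

Variables (u v : V) (s1 t1 s2 t2 : R).
Hypothesis hu : forall e, u 0 e = s1 * X 1 p 0 e + t1 * X 2 p 0 e.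
Hypothesis hv : forall e, v 0 e = s2 * X 1 p 0 e + t2 * X 2 p 0 e.

Definition uu a := u 0 a.
Definition vv a := v 0 a.
Definition wv d := \sum_(e < 3) Af p d e * u 0 e.
Definition Kuvv (a b c d : 'I_3) := u 0 a * v 0 b * v 0 c.

Lemma hup : dot thv uu = 0.
Proof. exact: (alg_dot hu (mF 1 0) (mF 2 0)). Qed.
Lemma hvp : dot thv vv = 0.
Proof. exact: (alg_dot hv (mF 1 0) (mF 2 0)). Qed.

Lemma hwp f : \sum_(d < 3) wv d * Pv d f = uu f.
Proof. exact: (alg_hw f hu (mF 1 1) (mF 1 2) (mF 2 1) (mF 2 2)). Qed.

Lemma N2p : S4w Kuvv wv (fun a b c d => rr2 g1 d a b c) = 0.
Proof. exact: (N2_0 wv E1p hup hvp hPp). Qed.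

Lemma N1p : S4w Kuvv wv (fun a b c d => rr1 g1 g0 dg1 d a b c) =
  - (3 / 4) * (tau Dthv uu vv - tau Dthv vv uu) ^+ 2.
Proof. exact: (N1_val E1p E2p E3p hup hvp hPp hDPp hwp hX0p). Qed.

Definition N0p := S4w Kuvv wv (fun a b c d => rr0 g1 g0 gm dg0 d a b c).
Definition Nm1p := S4w Kuvv wv (fun a b c d => rrm1 g0 gm dgm d a b c).
Definition Nm2p := S4w Kuvv wv (fun a b c d => rrm2 gm d a b c).

Lemma NUM_eq eps : eps != 0 ->
  \sum_(a < 3) \sum_(b < 3) \sum_(c < 3) \sum_(d < 3) \sum_(e < 3)
     u 0 a * v 0 b * v 0 c * Rm X eps d a b c p * Gm X eps p d e * u 0 e
  = (eps ^+ 2)^-1 * (- (3 / 4) * (tau Dthv uu vv - tau Dthv vv uu) ^+ 2)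
    + N0p + eps ^+ 2 * Nm1p + (eps ^+ 2) ^+ 2 * Nm2p.
Proof.
move=> e0.
have inner : forall a b c d, \sum_(e < 3)
     u 0 a * v 0 b * v 0 c * Rm X eps d a b c p * Gm X eps p d e * u 0 e
   = u 0 a * v 0 b * v 0 c * Rm X eps d a b c p * wv d.
  move=> a b c d; under eq_bigr => e _ do rewrite Gm_dec //.
  exact: (alg_inner _ _ _ _ hup).
under eq_bigr => a _ do under eq_bigr => b _ do under eq_bigr => c _ do
  under eq_bigr => d _ do rewrite inner Rm_dec //.
rewrite S4_split N2p N1p; rewrite /N0p /Nm1p /Nm2p /Kuvv; ring.
Qed.


Lemma gdot_sum eps (x y : V) :
  gdot X eps p x y = \sum_(k < 3) (\sum_(j < 3) x 0 j * Gm X eps p j k) * y 0 k.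
Proof.
rewrite /gdot; move: (Gm X eps p) => G.
by rewrite !mxE; apply: eq_bigr => k _; rewrite !mxE.
Qed.

Lemma gdot_val eps (x y : V) a1 b1 a2 b2 : eps != 0 ->
  (forall e, x 0 e = a1 * X 1 p 0 e + b1 * X 2 p 0 e) ->
  (forall e, y 0 e = a2 * X 1 p 0 e + b2 * X 2 p 0 e) ->
  gdot X eps p x y = a1 * a2 + b1 * b2.
Proof.
move=> e0 hx hy; rewrite gdot_sum.
under eq_bigr => k _ do under eq_bigr => j _ do rewrite Gm_dec //.
exact: (alg_gdot _ hx hy (mF 1 1) (mF 1 2) (mF 2 1) (mF 2 2) (mF 1 0) (mF 2 0)).
Qed.

Lemma c_eq : cstruct X 0 1 2 p =
  tau Dthv (fun e => X 1 p 0 e) (fun e => X 2 p 0 e)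
  - tau Dthv (fun e => X 2 p 0 e) (fun e => X 1 p 0 e).
Proof.
rewrite -(alg_c (Rel 1) (Rel 2)) /cstruct mxE.
by apply: eq_bigr => k _; rewrite mxE.
Qed.

Lemma final_bound : s1 * t2 - t1 * s2 != 0 ->
  exists C delta : R, 0 < delta /\
      forall eps : R, 0 < eps -> eps < delta ->
        `| Kext X eps p u v + 3 / (4 * eps ^+ 2) * (cstruct X 0 1 2 p) ^+ 2 | <= C.
Proof.
move=> hD.
exists ((`|N0p| + `|Nm1p| + `|Nm2p|) / (s1 * t2 - t1 * s2) ^+ 2), 1.
split => // eps e0 e1.
have en0 : eps != 0 by rewrite gt_eqF.
rewrite /Kext NUM_eq // (gdot_val en0 hu hu) (gdot_val en0 hv hv) (gdot_val en0 hu hv).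
rewrite (alg_tau Dthv hu hv) -c_eq.
move: (cstruct X 0 1 2 p) N0p Nm1p Nm2p => c n0 n1 n2.
set D := s1 * t2 - t1 * s2.
have dd : (s1 * s1 + t1 * t1) * (s2 * s2 + t2 * t2) - (s1 * s2 + t1 * t2) ^+ 2 = D ^+ 2.
  by rewrite /D; ring.
rewrite dd.
have D2 : D ^+ 2 != 0 by rewrite expf_neq0.
have -> : ((eps ^+ 2)^-1 * (- (3 / 4) * (D * c) ^+ 2) + n0 + eps ^+ 2 * n1
      + (eps ^+ 2) ^+ 2 * n2) / D ^+ 2 + 3 / (4 * eps ^+ 2) * c ^+ 2
    = (n0 + eps ^+ 2 * n1 + (eps ^+ 2) ^+ 2 * n2) / D ^+ 2.
  have e2 : eps ^+ 2 != 0 by rewrite expf_neq0.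
  have h4 : (4 : R) != 0 by rewrite pnatr_eq0.
  by field; rewrite hD en0.
have Dp : 0 < D ^+ 2 by rewrite exprn_even_gt0 //.
have Di : 0 < (D ^+ 2)^-1 by rewrite invr_gt0.
rewrite normrM (gtr0_norm Di) ler_pM2r //.
have t0 : 0 <= eps ^+ 2 by rewrite exprn_ge0 // ltW.
have t1' : eps ^+ 2 <= 1 by rewrite expr_le1 // ltW.
apply: (le_trans (ler_normD _ _)).
rewrite normrM (ger0_norm (exprn_ge0 2 t0)).
apply: (le_trans (lerD (ler_normD _ _) (lexx _))).
rewrite normrM (ger0_norm t0).
have a0 := normr_ge0 n0; have a1 := normr_ge0 n1; have a2 := normr_ge0 n2.
have t2' : (eps ^+ 2) ^+ 2 <= 1 by rewrite expr_le1.
nra.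
Qed.

End AtP.
End Geo.

Theorem lemma3p2 (R : realType) (U : set 'rV[R]_3) (X : 'I_3 -> 'rV[R]_3 -> 'rV[R]_3)
  (S : set 'rV[R]_3) (p : 'rV[R]_3) :
  open U -> U p ->
  (forall i, vsmooth_on U (X i)) ->
  (* X_0 transverse to D = span(X_1,X_2), (X_1,X_2) a frame of D *)
  (forall x, U x -> frameM X x \in unitmx) ->
  (* contact condition: [X_1,X_2] is not in D *)
  (forall x, U x -> ~ distr X x (lie (X 1) (X 2) x)) ->
  C2_surface S -> S p ->
  (* p is characteristic *)
  tangent_space S p = distr X p ->
  forall u v : 'rV[R]_3,
    tangent_space S p u -> tangent_space S p v ->
    (forall s t : R, s *: u + t *: v = 0 -> s = 0 /\ t = 0) ->
    exists C delta : R, 0 < delta /\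
      forall eps : R, 0 < eps -> eps < delta ->
        `| Kext X eps p u v + 3 / (4 * eps ^+ 2) * (cstruct X 0 1 2 p) ^+ 2 | <= C.
Proof.
move=> oU Up hX hunit _ _ _ Htan u v Tu Tv hind.
have : distr X p u by rewrite -Htan.
case=> s1 [t1 Eu].
have : distr X p v by rewrite -Htan.
case=> s2 [t2 Ev].
have hu : forall e, u 0 e = s1 * X 1 p 0 e + t1 * X 2 p 0 e.
  by move=> e; rewrite Eu !mxE.
have hv : forall e, v 0 e = s2 * X 1 p 0 e + t2 * X 2 p 0 e.
  by move=> e; rewrite Ev !mxE.
apply: (final_bound oU hX hunit Up hu hv).
apply/negP => /eqP D0.
have z1 : t2 *: u + (- t1) *: v = 0.
  apply/rowP => e; rewrite !mxE hu hv.
  have -> : t2 * (s1 * X 1 p 0 e + t1 * X 2 p 0 e) + - t1 * (s2 * X 1 p 0 e + t2 * X 2 p 0 e)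
    = (s1 * t2 - t1 * s2) * X 1 p 0 e by ring.
  by rewrite D0 mul0r.
have z2 : s2 *: u + (- s1) *: v = 0.
  apply/rowP => e; rewrite !mxE hu hv.
  have -> : s2 * (s1 * X 1 p 0 e + t1 * X 2 p 0 e) + - s1 * (s2 * X 1 p 0 e + t2 * X 2 p 0 e)
    = - ((s1 * t2 - t1 * s2) * X 2 p 0 e) by ring.
  by rewrite D0 mul0r oppr0.
have [_ /eqP] := hind _ _ z1; rewrite oppr_eq0 => /eqP t10.
have [_ /eqP] := hind _ _ z2; rewrite oppr_eq0 => /eqP s10.
have z3 : 1 *: u + 0 *: v = 0.
  by apply/rowP => e; rewrite !mxE hu s10 t10; ring.
have [/eqP] := hind _ _ z3.
by rewrite oner_eq0.
Qed.
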